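(* Let $q$ be a power of $2$, let $\alpha\in\mathbb{F}_q$ be such that $x^2+x+\alpha$ is irreducible over $\mathbb{F}_q$, and let $\beta\in\{0,\alpha\}$. Let $V$ be the $4$-dimensional symplectic space and $u=V_\beta(4)$ the linear map described in the context. Suppose $v\in V$ satisfies $v(u-1)^3\neq0$ and $(v(u-1),v(u-1)^2)\neq0$. Write $v_i=v(u-1)^{i-1}$ for $1\le i\le4$, and set $\lambda=(v_2,v_3)$ and $\mu=(v_1,v_2)$. Then $\beta=\alpha$ if and only if $x^2+x+\lambda^{-1}\mu$ is irreducible over $\mathbb{F}_q$.
   Context: $V$ has basis $e_{-3},e_{-1},e_1,e_3$ with symplectic form $(\,,\,)$ given by $(e_{-3},e_3)=(e_3,e_{-3})=1$, $(e_{-1},e_1)=(e_1,e_{-1})=1$, and all other values on pairs of basis vectors $0$. Vectors are acted on from the right. $V_\beta(4)$ is the linear map $e_{-3}\mapsto e_{-3}+e_{-1}+e_1+\beta e_3$, $e_{-1}\mapsto e_{-1}+e_1$, $e_1\mapsto e_1+e_3$, $e_3\mapsto e_3$; it preserves the symplectic form. *)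

(* Defs.v *)
From HB Require Import structures.
From mathcomp Require Import all_boot all_order all_algebra.
Set Implicit Arguments. Unset Strict Implicit. Unset Printing Implicit Defensive.
Import Order.TTheory GRing.Theory.
Local Open Scope ring_scope.

(* V = 'rV[F]_4 ; coordinate indices 0,1,2,3 correspond to the basis
   e_{-3}, e_{-1}, e_1, e_3.  Vectors are row vectors acted on from the right. *)

Definition sympJ (F : fieldType) : 'M[F]_4 :=
  \matrix_(i < 4, j < 4) (if (i + j == 3)%N then 1 else 0).

Definition sympform (F : fieldType) (x y : 'rV[F]_4) : F :=
  (x *m sympJ F *m y^T) ord0 ord0.

(* V_beta(4): row i is the image of the i-th basis vector. *)
Definition Vbeta4 (F : fieldType) (beta : F) : 'M[F]_4 :=
  \matrix_(i < 4, j < 4)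
    nth 0 (nth [::] [:: [:: 1; 1; 1; beta];
                        [:: 0; 1; 1; 0];
                        [:: 0; 0; 1; 1];
                        [:: 0; 0; 0; 1]] i) j.

(* Main.v *)
Require Import Defs.
From HB Require Import structures.
From mathcomp Require Import all_boot all_order all_algebra all_field.
From mathcomp Require Import ring.
Import GRing.Theory.
Local Open Scope ring_scope.

Definition r4 {F : fieldType} (a b c d : F) : 'rV[F]_4 := \row_(j < 4) nth 0 [:: a; b; c; d] j.

Lemma vN (F : fieldType) (beta a b c d : F) :
  r4 a b c d *m (Vbeta4 beta - 1) = r4 0 a (a + b) (a * beta + c).
Proof.
apply/rowP => j; rewrite !mxE !big_ord_recr big_ord0 /= !mxE /=.
case: j => [[|[|[|[|?]]]] //= ?]; rewrite /= -?val_eqE /=. all: try ring.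
Qed.

Lemma sf (F : fieldType) (a b c d a' b' c' d' : F) :
  sympform (r4 a b c d) (r4 a' b' c' d') = a * d' + b * c' + c * b' + d * a'.
Proof.
rewrite /sympform !mxE !big_ord_recr big_ord0 /= !mxE.
rewrite !big_ord_recr !big_ord0 /= !mxE /=; ring.
Qed.

Lemma r4E (F : fieldType) (v : 'rV[F]_4) : v = r4 (v 0 0) (v 0 1) (v 0 2) (v 0 3).
Proof.
apply/rowP => j; rewrite !mxE; case: j => [[|[|[|[|?]]]] //= ?]; congr (v _ _); exact: val_inj.
Qed.

Lemma size_p (F : fieldType) (c : F) : size ('X^2 + 'X + c%:P : {poly F}) = 3%N.
Proof. by rewrite -addrA size_polyDl ?size_polyXn // size_XaddC. Qed.

Lemma irr_noroot (F : fieldType) (c x : F) :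
  irreducible_poly ('X^2 + 'X + c%:P) -> ~~ root ('X^2 + 'X + c%:P) x.
Proof.
move=> [_ H]; apply/negP; rewrite root_factor_theorem => r.
have := H ('X - x%:P); rewrite size_XsubC => /(_ isT r) /eqp_size.
by rewrite size_XsubC size_p.
Qed.

Theorem lemma5p3p3 (F : finFieldType) (k : nat) (hq : #|F| = (2 ^ k)%N)
  (alpha beta : F)
  (halpha : irreducible_poly ('X^2 + 'X + alpha%:P))
  (hbeta : beta = 0 \/ beta = alpha)
  (v : 'rV[F]_4) :
  let N := Vbeta4 beta - 1 in
  v *m N ^+ 3 != 0 ->
  sympform (v *m N) (v *m N ^+ 2) != 0 ->
  let v1 := v in let v2 := v *m N in let v3 := v *m N ^+ 2 in
  let lambda := sympform v2 v3 in
  let mu := sympform v1 v2 in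
  beta = alpha <-> irreducible_poly ('X^2 + 'X + (lambda^-1 * mu)%:P).
Proof.
have h2 : forall x : F, x + x = 0.
  move=> x; have := pcharf0 (card_finPcharP hq (isT : prime 2)).
  by move=> h; rewrite -mulr2n -mulr_natr h mulr0.
rewrite (@r4E _ v); move: (v 0 0) (v 0 1) (v 0 2) (v 0 3) => a b c d.
move=> N _; rewrite /N expr2 -mulmxE mulmxA !vN !sf => hl.
have ha : a != 0 by apply: contraNneq hl => ->; apply/eqP; ring.
set m := _^-1 * _.
set t := b / a.
have hm : m = beta + t + t ^+ 2.
  rewrite /m (_ : a * (a * beta + c) + b * (a + b) + c * a + d * 0
       = a * a * beta + a * b + b * b + (a * c + a * c)); last by ring.
  rewrite h2 addr0 /t; field. all: try done.
have hr : forall x, root ('X^2 + 'X + m%:P) x = root ('X^2 + 'X + beta%:P) (x + t).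
  move=> x; rewrite /root !(hornerD, hornerXn, hornerX, hornerC) hm.
  congr (_ == 0); rewrite -[X in X = _]addr0 -(h2 (x * t)); ring.
split.
  move=> hba; apply: cubic_irreducible; first by rewrite size_p.
  by move=> x; rewrite hr hba; apply: irr_noroot.
move=> hirr; case: hbeta => // hb0; exfalso.
have := @irr_noroot _ _ t hirr; rewrite hr hb0 h2 /root !(hornerD, hornerXn, hornerX, hornerC).
rewrite expr2 mul0r !add0r; by move=> /eqP.
Qed.
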